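(* Let $\mathcal H$ be a separable complex Hilbert space, $A\in L(\mathcal H)^+$ and $T\in L(\mathcal H)$. Then $T$ is an $A$-projection if and only if $P_{\overline{R(A)}}T$ is idempotent (i.e. $(P_{\overline{R(A)}}T)^2=P_{\overline{R(A)}}T$) and $A$-selfadjoint.
   Context: $L(\mathcal H)^+$ denotes positive (semidefinite) bounded operators; $P_{\mathcal M}$ is the orthogonal projection onto a closed subspace $\mathcal M$. For $A\in L(\mathcal H)^+$, $\|x\|_A=\langle Ax,x\rangle^{1/2}$. An operator $C\in L(\mathcal H)$ is $A$-selfadjoint if $AC=C^*A$. $T$ is an $A$-projection if $\|y-Ty\|_A\le\|y-s\|_A$ for all $y\in\mathcal H$ and all $s\in\overline{R(T)}$. *)

(* Defs.v *)
From HB Require Import structures.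
From mathcomp Require Import all_boot all_order all_algebra.
From mathcomp Require Import reals.
From mathcomp Require Import complex.
Set Implicit Arguments. Unset Strict Implicit. Unset Printing Implicit Defensive.
Import Order.TTheory GRing.Theory Num.Theory.
Local Open Scope ring_scope.

Section Hilbert.
Variables (R : realType) (V : lmodType R[i]) (ip : V -> V -> R[i]).

Definition is_inner_product : Prop :=
  [/\ forall (a : R[i]) (x y z : V), ip (a *: x + y) z = a * ip x z + ip y z,
      forall x y : V, ip x y = (ip y x)^*,
      forall x : V, 0 <= ip x x
    & forall x : V, ip x x = 0 -> x = 0].

Definition hnorm (x : V) : R[i] := sqrtC (ip x x).

Definition cauchy_seq (u : nat -> V) : Prop :=
  forall e : R[i], 0 < e -> exists N : nat,
    forall m n : nat, (N <= m)%N -> (N <= n)%N -> hnorm (u m - u n) < e.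

Definition converges_to (u : nat -> V) (x : V) : Prop :=
  forall e : R[i], 0 < e -> exists N : nat,
    forall n : nat, (N <= n)%N -> hnorm (u n - x) < e.

Definition complete_ip : Prop :=
  forall u : nat -> V, cauchy_seq u -> exists x : V, converges_to u x.

Definition separable_ip : Prop :=
  exists d : nat -> V, forall (x : V) (e : R[i]), 0 < e ->
    exists n : nat, hnorm (x - d n) < e.

Definition separable_hilbert : Prop :=
  [/\ is_inner_product, complete_ip & separable_ip].

Definition bounded_op (T : V -> V) : Prop :=
  (forall (a : R[i]) (x y : V), T (a *: x + y) = a *: T x + T y) /\
  exists M : R[i], forall x : V, hnorm (T x) <= M * hnorm x.

Definition positive_op (A : V -> V) : Prop :=
  bounded_op A /\ forall x : V, 0 <= ip (A x) x.

Definition closure_range (T : V -> V) (y : V) : Prop :=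
  forall e : R[i], 0 < e -> exists x : V, hnorm (y - T x) < e.

Definition is_orth_proj (P : V -> V) (M : V -> Prop) : Prop :=
  (forall x : V, M (P x)) /\
  (forall x m : V, M m -> ip (x - P x) m = 0).

Definition is_adjoint (C D : V -> V) : Prop :=
  forall x y : V, ip (C x) y = ip x (D y).

Definition A_selfadjoint (A C : V -> V) : Prop :=
  exists D : V -> V, is_adjoint C D /\ forall x : V, A (C x) = D (A x).

Definition Anorm (A : V -> V) (x : V) : R[i] := sqrtC (ip (A x) x).

Definition A_projection (A T : V -> V) : Prop :=
  forall y s : V, closure_range T s -> Anorm A (y - T y) <= Anorm A (y - s).

Definition op_idempotent (C : V -> V) : Prop :=
  forall x : V, C (C x) = C x.

End Hilbert.

(* Main.v *)
Require Import Defs.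
From HB Require Import structures.
From mathcomp Require Import all_boot all_order all_algebra.
From mathcomp Require Import reals.
From mathcomp Require Import complex.
From mathcomp Require Import ring.
From Stdlib Require Import IndefiniteDescription.
Import Order.TTheory GRing.Theory Num.Theory.
Local Open Scope ring_scope.

Lemma cpar (R : realType) (c1 c2 : R[i]) : (c1 + c2) * (c1 + c2)^* <= 2%:R * (c1 * c1^*) + 2%:R * (c2 * c2^*).
Proof.
rewrite -!normCK.
apply: (@le_trans _ _ ((`|c1| + `|c2|)^+2)).
  rewrite ler_pXn2r // ?nnegrE ?addr_ge0 // ler_normD //.
rewrite -subr_ge0.
have -> : 2%:R * `|c1| ^+ 2 + 2%:R * `|c2| ^+ 2 - (`|c1| + `|c2|) ^+ 2 = (`|c1| - `|c2|) * (`|c1| - `|c2|)^*.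
  rewrite conj_Creal; last by rewrite realB.
  ring.
exact: mul_conjC_ge0.
Qed.

Lemma arch (R : realType) (e : R[i]) : 0 < e -> exists N : nat, forall n, (N <= n)%N -> (n.+1%:R)^-1 < e.
Proof.
move=> e0.
have [a ea] : exists a : R, e = (a%:C)%C by apply/complex_realP; exact: gtr0_real.
rewrite ea ltcR in e0.
have ie : 0 <= a^-1 by rewrite invr_ge0 ltW.
exists (Num.Def.archi_bound (a^-1)) => n hn.
have h1 : (n.+1%:R : R)^-1 < a.
  rewrite -[a]invrK ltf_pV2 ?posrE ?invr_gt0 ?ltr0Sn //.
  apply: (lt_le_trans (archi_boundP ie)); rewrite ler_nat; exact: leqW.
rewrite ea -(rmorph_nat (real_complex R)) -fmorphV ltcR //.
Qed.


Section Basics.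
Variables (R : realType) (V : lmodType R[i]) (ip : V -> V -> R[i]).
Hypothesis Hip : is_inner_product ip.

Lemma ipDl x y z : ip (x + y) z = ip x z + ip y z.
Proof. by case: Hip => H _ _ _; have := H 1 x y z; rewrite scale1r mul1r. Qed.

Lemma ip0l z : ip 0 z = 0.
Proof.
apply: (@addrI _ (ip 0 z)); rewrite addr0 -ipDl; by rewrite addr0.
Qed.

Lemma ipZl a x z : ip (a *: x) z = a * ip x z.
Proof. by case: Hip => H _ _ _; have := H a x 0 z; rewrite addr0 ip0l addr0. Qed.

Lemma ipNl x z : ip (- x) z = - ip x z.
Proof. by rewrite -scaleN1r ipZl mulN1r. Qed.

Lemma ipBl x y z : ip (x - y) z = ip x z - ip y z.
Proof. by rewrite ipDl ipNl. Qed.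

Lemma ip_conj x y : ip x y = (ip y x)^*.
Proof. by case: Hip => _ H _ _; apply: H. Qed.

Lemma ipDr x y z : ip z (x + y) = ip z x + ip z y.
Proof. by rewrite (ip_conj z x) (ip_conj z y) ip_conj ipDl rmorphD. Qed.

Lemma ip0r z : ip z 0 = 0.
Proof. by rewrite ip_conj ip0l conjC0. Qed.

Lemma ipZr a x z : ip z (a *: x) = a^* * ip z x.
Proof. by rewrite (ip_conj z x) ip_conj ipZl rmorphM. Qed.

Lemma ipNr x z : ip z (- x) = - ip z x.
Proof. by rewrite (ip_conj z x) ip_conj ipNl rmorphN. Qed.

Lemma ipBr x y z : ip z (x - y) = ip z x - ip z y.
Proof. by rewrite ipDr ipNr. Qed.

Lemma ipxx_ge0 x : 0 <= ip x x.
Proof. by case: Hip. Qed.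

Lemma ipxx_real x : (ip x x)^* = ip x x.
Proof. by apply: conj_Creal; apply: ger0_real; apply: ipxx_ge0. Qed.

Lemma ipxx_eq0 {x : V} : ip x x = 0 -> x = 0.
Proof. by case: Hip => _ _ _; apply. Qed.

Lemma ipxx_gt0 x : x != 0 -> 0 < ip x x.
Proof.
move=> nx; rewrite lt_def ipxx_ge0 andbT; apply/eqP => /ipxx_eq0 h.
by rewrite h eqxx in nx.
Qed.

Lemma CS x y : ip x y * (ip x y)^* <= ip x x * ip y y.
Proof.
have [->|ny] := eqVneq y 0; first by rewrite ip0r mul0r ip0r mulr0.
set n := ip y y; have n0 : 0 < n by apply: ipxx_gt0.
set c := ip x y.
have H := ipxx_ge0 (x - (c / n) *: y).
rewrite ipBl !ipBr !ipZl !ipZr in H.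
have cj : (c / n)^* = c^* / n.
  by rewrite rmorphM fmorphV; congr (_ * _^-1); exact: ipxx_real.
rewrite -/n -/c (ip_conj y x) -/c cj in H.
have nn : n != 0 by rewrite gt_eqF.
have E : ip x x - (c^* / n) * c - ((c / n) * c^* - (c / n) * ((c^* / n) * n))
     = ip x x - c * c^* / n by field.
rewrite E subr_ge0 ler_pdivrMr // in H.
Qed.

Lemma hnorm0 : hnorm ip 0 = 0.
Proof. by rewrite /hnorm ip0l sqrtC0. Qed.

Lemma clos_self (S : V -> V) x : closure_range ip S (S x).
Proof. by move=> e e0; exists x; rewrite subrr hnorm0. Qed.

Lemma clos_ip {S : V -> V} {y : V} : closure_range ip S y -> forall e, 0 < e ->
  exists x, ip (y - S x) (y - S x) < e.
Proof.
move=> H e e0; have [|x hx] := H (sqrtC e); first by rewrite sqrtC_gt0.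
exists x; move: hx; rewrite /hnorm ltr_sqrtC // ?nnegrE ?ipxx_ge0 // ltW //.
Qed.

Lemma hnorm_lt z e : 0 < e -> ip z z < e ^+ 2 -> hnorm ip z < e.
Proof.
move=> e0 h; rewrite /hnorm -(sqrCK (ltW e0)) ltr_sqrtC // ?nnegrE ?ipxx_ge0 //.
by rewrite exprn_ge0 // ltW.
Qed.

Lemma lt_hnorm z e : 0 < e -> hnorm ip z < e -> ip z z < e ^+ 2.
Proof.
move=> e0; rewrite /hnorm -{1}(sqrCK (ltW e0)) ltr_sqrtC // ?nnegrE ?ipxx_ge0 //.
by rewrite exprn_ge0 // ltW.
Qed.

Lemma small0 (r : R[i]) : 0 <= r -> (forall e, 0 < e -> r <= e) -> r = 0.
Proof.
move=> r0 H; case: (eqVneq r 0) => // nz.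
have rp : 0 < r by rewrite lt_def nz r0.
have := H (r / 2%:R) (divr_gt0 rp (ltr0Sn _ _)).
rewrite ler_pdivlMr ?ltr0Sn // mulr_natr mulr2n gerDl => h.
by have := lt_le_trans rp h; rewrite ltxx.
Qed.

Lemma small0K {r K : R[i]} : 0 <= r -> 0 <= K ->
  (forall e, 0 < e -> r <= K * e) -> r = 0.
Proof.
move=> r0 K0 H; apply: small0 => // e e0.
have K1 : 0 < K + 1 by apply: (lt_le_trans ltr01); rewrite lerDr.
apply: (le_trans (H _ (divr_gt0 e0 K1))).
rewrite mulrCA ler_piMr ?ltW // ltr_pdivrMr // mul1r ltrDl ltr01 //.
Qed.

Lemma orth_closure {S : V -> V} {g : V} : (forall z, ip g (S z) = 0) ->
  forall m, closure_range ip S m -> ip g m = 0.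
Proof.
move=> H m hm; apply/eqP; rewrite -mul_conjC_eq0; apply/eqP.
apply: (small0K (mul_conjC_ge0 _) (ipxx_ge0 g)) => e e0.
have [z hz] := clos_ip hm _ e0.
have -> : ip g m = ip g (m - S z) by rewrite ipBr H subr0.
apply: (le_trans (CS _ _)); rewrite ler_wpM2l ?ipxx_ge0 // ltW //.
Qed.

Lemma par x y : ip (x + y) (x + y) <= 2%:R * ip x x + 2%:R * ip y y.
Proof.
have E : ip (x + y) (x + y) + ip (x - y) (x - y) = 2%:R * ip x x + 2%:R * ip y y.
  rewrite !ipDl !ipDr !ipNl !ipNr; ring.
by rewrite -E lerDl ipxx_ge0.
Qed.

Lemma ipNN x : ip (- x) (- x) = ip x x.
Proof. by rewrite ipNl ipNr opprK. Qed.


Definition lin (F : V -> V) := forall a x y, F (a *: x + y) = a *: F x + F y.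

Lemma linD {F : V -> V} : lin F -> forall x y, F (x + y) = F x + F y.
Proof. by move=> HF x y; have := HF 1 x y; rewrite !scale1r. Qed.

Lemma lin0 {F : V -> V} : lin F -> F 0 = 0.
Proof. by move=> HF; apply: (@addrI _ (F 0)); rewrite -linD // !addr0. Qed.

Lemma linZ {F : V -> V} : lin F -> forall a x, F (a *: x) = a *: F x.
Proof. by move=> HF a x; have := HF a x 0; rewrite !addr0 lin0 // addr0. Qed.

Lemma linN {F : V -> V} : lin F -> forall x, F (- x) = - F x.
Proof. by move=> HF x; rewrite -scaleN1r linZ // scaleN1r. Qed.

Lemma linB {F : V -> V} : lin F -> forall x y, F (x - y) = F x - F y.
Proof. by move=> HF x y; rewrite linD // linN. Qed.

Section Main.
Variables (A T P : V -> V).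
Hypothesis HAl : lin A.
Hypothesis HApos : forall x, 0 <= ip (A x) x.
Hypothesis HTl : lin T.
Hypothesis HPM : forall x, closure_range ip A (P x).
Hypothesis HPo : forall x m, closure_range ip A m -> ip (x - P x) m = 0.

Lemma A_sa x y : ip (A x) y = ip x (A y).
Proof.
have real z : ip z (A z) = ip (A z) z.
  by rewrite ip_conj conj_Creal // ger0_real ?HApos.
have E1 := real (x + y).
rewrite (linD HAl) !ipDl !ipDr (real x) (real y) in E1.
have E2 := real (x + 'i *: y).
rewrite (linD HAl) (linZ HAl) !ipDl !ipDr !ipZl !ipZr (real x) (real y) conjCi in E2.
have E : forall (L1 R1 L2 R2 : R[i]), L1 = R1 -> L2 = R2 -> 'i * (L1 - R1) - (L2 - R2) = 0.
  by move=> ? ? ? ? -> ->; rewrite !subrr mulr0 subr0.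
have h2 : 2%:R * 'i != 0 :> R[i] by rewrite mulf_neq0 ?neq0Ci ?pnatr_eq0.
apply: (mulfI h2); apply/eqP; rewrite -subr_eq0; apply/eqP.
rewrite -[RHS](E _ _ _ _ (esym E1) (esym E2)); ring.
Qed.

Lemma AP x : A (P x) = A x.
Proof.
have h z : ip (A (x - P x)) z = 0 by rewrite A_sa; apply: HPo; apply: clos_self.
have := ipxx_eq0 (h _); rewrite linB // => /eqP; rewrite subr_eq0 => /eqP ->.
by [].
Qed.

Lemma ipAP w z : ip (A w) (P z) = ip (A w) z.
Proof.
have : ip (A w) (z - P z) = 0 by rewrite ip_conj HPo ?conjC0 //; apply: clos_self.
by rewrite ipBr => /eqP; rewrite subr_eq0 => /eqP ->.
Qed.

Lemma Puniq x m : closure_range ip A m ->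
  (forall m', closure_range ip A m' -> ip (x - m) m' = 0) -> P x = m.
Proof.
move=> hm Hm; apply/eqP; rewrite -subr_eq0; apply/eqP; apply: ipxx_eq0.
have E : P x - m = (x - m) - (x - P x).
  by symmetry; rewrite opprB addrC addrA subrK.
by rewrite {1}E ipBl !ipBr !Hm ?HPo ?HPM // !subrr.
Qed.

Lemma Pbound x : ip (P x) (P x) <= ip x x.
Proof.
set d := x - P x.
have h0 : ip d (P x) = 0 := HPo x (P x) (HPM x).
have E : x = P x + d by rewrite /d addrC subrK.
clearbody d.
have E2 : ip x x = ip (P x) (P x) + ip d d.
  rewrite [in LHS]E ipDl !ipDr h0 (ip_conj (P x) d) h0.
  by rewrite conjC0 addr0 add0r.
by rewrite E2 lerDl ipxx_ge0.
Qed.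


Lemma AQ x : A (P (T x)) = A (T x).
Proof. exact: AP. Qed.

Lemma Tbound : (exists M : R[i], forall x, hnorm ip (T x) <= M * hnorm ip x) ->
  exists K, 0 <= K /\ forall x, ip (T x) (T x) <= K * ip x x.
Proof.
case=> M HM; exists (M * M^*); split; first exact: mul_conjC_ge0.
move=> x; case: (eqVneq x 0) => [->|nx].
  by rewrite (lin0 HTl) ip0l mulr0.
have hx : 0 < hnorm ip x by rewrite /hnorm sqrtC_gt0 ipxx_gt0.
have h := HM x.
have M0 : 0 <= M.
  by rewrite -(pmulr_lge0 _ hx); apply: le_trans h; rewrite /hnorm sqrtC_ge0 ipxx_ge0.
rewrite (conj_Creal (ger0_real M0)).
have h2 : hnorm ip (T x) ^+ 2 <= (M * hnorm ip x) ^+ 2.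
  rewrite ler_pXn2r // ?nnegrE ?(mulr_ge0 M0 (ltW hx)) // /hnorm sqrtC_ge0 ipxx_ge0 //.
by rewrite exprMn /hnorm !sqrtCK expr2 in h2.
Qed.

Lemma back (D : V -> V) :
  (forall x, P (T (P (T x))) = P (T x)) ->
  (forall x y, ip (P (T x)) y = ip x (D y)) ->
  (forall x, A (P (T x)) = D (A x)) -> A_projection ip A T.
Proof.
move=> idem Dadj HD.
have key w x : ip (A w) (T x) = ip (A (P (T w))) x.
  by rewrite -ipAP ip_conj Dadj -HD -ip_conj.
have z0 y x : ip (A (y - T y)) (T x) = 0.
  have -> : A (y - T y) = A (y - P (T y)) by rewrite !(linB HAl) AQ.
  by rewrite key AQ (linB HTl) (linB HAl) -AQ -(AQ (P (T y))) idem subrr ip0l.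
move=> y s hs.
rewrite /Anorm ler_sqrtC ?nnegrE ?HApos //.
set u := y - T y; set v := T y - s.
have E : y - s = u + v by rewrite /u /v addrA subrK.
have c0 : ip (A u) v = 0.
  by rewrite /v ipBr (z0 y y) (orth_closure (z0 y) s hs) subrr.
clearbody u v.
rewrite E (linD HAl) ipDl !ipDr c0 (A_sa v u) (ip_conj v (A u)) c0 conjC0.
by rewrite addr0 add0r lerDl HApos.
Qed.


Section Fwd.
Hypothesis HAP : A_projection ip A T.

Lemma H0 y x : ip (A (y - T y)) (T x) = 0.
Proof.
set u := y - T y; set w := T x.
set c := ip (A u) w; set k := ip (A w) w.
have k0 : 0 <= k := HApos w.
have k1 : 0 < k + 1 by apply: (lt_le_trans ltr01); rewrite lerDr.
have k1n : k + 1 != 0 by rewrite gt_eqF.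
set l := c / (k + 1).
have hp := HAP y (T (y + l *: x)) (clos_self _ _).
have Eu : y - T (y + l *: x) = u - l *: w.
  by rewrite (linD HTl) (linZ HTl) opprD addrA.
rewrite /Anorm ler_sqrtC ?nnegrE ?HApos // Eu -/u in hp.
clearbody u w.
have kr : (k + 1)^* = k + 1 by apply: conj_Creal; apply: ger0_real; apply: ltW.
have cj : l^* = c^* / (k + 1).
  by rewrite /l rmorphM fmorphV; congr (_ * _^-1); exact: kr.
rewrite (linB HAl) (linZ HAl) ipBl !ipBr !ipZl !ipZr -/c -/k (A_sa w u) in hp.
rewrite (ip_conj w (A u)) -/c cj in hp.
rewrite -subr_ge0 in hp.
have pp : 0 < (k + 2%:R) / (k + 1) ^+ 2.
  by rewrite divr_gt0 ?exprn_gt0 // (lt_le_trans (ltr0Sn _ 1)) // lerDr.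
match type of hp with is_true (0 <= ?E) =>
  have EE : E = - (c * c^* * ((k + 2%:R) / (k + 1) ^+ 2)) by rewrite /l; field end.
rewrite EE oppr_ge0 pmulr_lle0 // in hp.
have : c * c^* = 0 by apply/eqP; rewrite eq_le hp mul_conjC_ge0.
by move/eqP; rewrite mul_conjC_eq0 => /eqP.
Qed.


Lemma H1 x y : ip (A (y - P (T y))) (P (T x)) = 0.
Proof.
have -> : A (y - P (T y)) = A (y - T y) by rewrite !(linB HAl) AQ.
by rewrite ipAP H0.
Qed.

Lemma H2 x y : ip (A (P (T y))) x = ip (A y) (P (T x)).
Proof.
have h1 a b : ip (A b) (P (T a)) = ip (A (P (T b))) (P (T a)).
  by apply/eqP; rewrite -subr_eq0 -ipBl -(linB HAl) H1.
rewrite A_sa ip_conj h1 -ip_conj -A_sa -h1 //.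
Qed.

Lemma AQQ y : A (P (T (y - P (T y)))) = 0.
Proof.
apply: ipxx_eq0; by rewrite H2 H1.
Qed.

Lemma idem y : P (T (P (T y))) = P (T y).
Proof.
apply: Puniq (HPM _) _ => m hm.
have -> : T (P (T y)) - P (T y) = (T (P (T y)) - T y) + (T y - P (T y)).
  by rewrite addrA subrK.
rewrite ipDl HPo // addr0.
apply: (orth_closure _ m hm) => z.
rewrite -A_sa.
have -> : A (T (P (T y)) - T y) = - A (P (T (y - P (T y)))).
  by rewrite AQ (linB HTl) !(linB HAl) opprB.
by rewrite AQQ oppr0 ip0l.
Qed.


Section Adj.
Variable K : R[i].
Hypothesis K0 : 0 <= K.
Hypothesis HKb : forall x, ip (T x) (T x) <= K * ip x x.
Hypothesis Hcomp : complete_ip ip.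

Lemma Qbound x : ip (P (T x)) (P (T x)) <= K * ip x x.
Proof. exact: le_trans (Pbound _) (HKb x). Qed.

Lemma KAQ d : ip (A (P (T d))) (A (P (T d))) <= K * ip (A d) (A d).
Proof.
set v := A (P (T d)).
case: (eqVneq (ip v v) 0) => [->|nz]; first by rewrite mulr_ge0 ?ipxx_ge0.
have nv0 : 0 < ip v v by rewrite lt_def nz ipxx_ge0.
have e1 : ip v v = ip (A d) (P (T v)) by rewrite {1}/v H2.
have h := CS (A d) (P (T v)).
rewrite -e1 ipxx_real in h.
have h' := le_trans h (ler_wpM2l (ipxx_ge0 (A d)) (Qbound v)).
by rewrite mulrA ler_pM2r // mulrC in h'.
Qed.


Lemma exD y : exists w, forall x, ip (P (T x)) y = ip x w.
Proof.
have stepa x : ip (P (T x)) y = ip (P (T x)) (P y).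
  apply/eqP; rewrite -subr_eq0 -ipBr ip_conj HPo ?HPM ?conjC0 //.
set u := P y.
have hu : closure_range ip A u := HPM y.
have ex_z n : exists z, ip (u - A z) (u - A z) < (n.+1%:R)^-1.
  by apply: (clos_ip hu); rewrite invr_gt0 ltr0Sn.
pose z n := proj1_sig (constructive_indefinite_description _ (ex_z n)).
have hz n : ip (u - A (z n)) (u - A (z n)) < (n.+1%:R)^-1
  := proj2_sig (constructive_indefinite_description _ (ex_z n)).
pose v n := A (P (T (z n))).
have cv : cauchy_seq ip v.
  move=> e e0.
  set B := 4%:R * K + 1.
  have B0 : 0 < B by apply: (lt_le_trans ltr01); rewrite /B lerDr mulr_ge0 ?ler0n.
  have [N hN] := @arch _ _ (divr_gt0 (exprn_gt0 2 e0) B0).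
  exists N => m n hm hn; apply: hnorm_lt => //.
  have -> : v m - v n = A (P (T (z m - z n))) by rewrite /v !AQ (linB HTl) (linB HAl).
  apply: le_lt_trans (KAQ _) _.
  have E : A (z m - z n) = - (u - A (z m)) + (u - A (z n)).
    by rewrite (linB HAl) opprB addrA subrK.
  rewrite E.
  apply: (@le_lt_trans _ _ (K * (2%:R * (e^+2/B) + 2%:R * (e^+2/B)))).
    apply: ler_wpM2l => //; apply: le_trans (par _ _) _; rewrite ipNN.
    apply: lerD; apply: ler_wpM2l; rewrite ?ler0n //; apply: ltW;
      apply: lt_trans (hz _) _; exact: hN.
  have -> : K * (2%:R * (e ^+ 2 / B) + 2%:R * (e ^+ 2 / B)) = e ^+ 2 * (4%:R * K / B).
    ring.
  by rewrite gtr_pMr ?exprn_gt0 // ltr_pdivrMr // mul1r /B ltrDl ltr01.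
have [w hw] := Hcomp v cv.
exists w => x; rewrite stepa.
apply/eqP; rewrite -subr_eq0; apply/eqP.
set d := ip (P (T x)) u - ip x w.
apply/eqP; rewrite -mul_conjC_eq0; apply/eqP.
have K0' : 0 <= 2%:R * ip (P (T x)) (P (T x)) + 2%:R * ip x x.
  by rewrite addr_ge0 // mulr_ge0 ?ipxx_ge0 ?ler0n.
apply: (small0K (mul_conjC_ge0 _) K0') => e e0.
have [N1 hN1] := @arch _ _ e0.
have [|N2 hN2] := hw (sqrtC e); first by rewrite sqrtC_gt0.
set n := maxn N1 N2.
have dn : d = ip (P (T x)) (u - A (z n)) + ip x (v n - w).
  have h : ip (P (T x)) (A (z n)) = ip x (v n) by rewrite ip_conj -H2 -ip_conj.
  by rewrite /d !ipBr h addrA subrK.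
rewrite dn; apply: le_trans (cpar _ _ _) _.
have -> : (2%:R * ip (P (T x)) (P (T x)) + 2%:R * ip x x) * e
   = 2%:R * (ip (P (T x)) (P (T x)) * e) + 2%:R * (ip x x * e) by ring.
apply: lerD; apply: ler_wpM2l; rewrite ?ler0n //.
  apply: le_trans (CS _ _) _; apply: ler_wpM2l; rewrite ?ipxx_ge0 //; apply: ltW.
  apply: lt_trans (hz n) (hN1 n _); exact: leq_maxl.
apply: le_trans (CS _ _) _; apply: ler_wpM2l; rewrite ?ipxx_ge0 //; apply: ltW.
have h2 : ip (v n - w) (v n - w) < sqrtC e ^+ 2.
  by apply: lt_hnorm; [rewrite sqrtC_gt0 | exact: hN2 n (leq_maxr _ _)].
by rewrite sqrtCK in h2.
Qed.


Lemma fwd_sa : A_selfadjoint ip A (fun x => P (T x)).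
Proof.
pose D y := proj1_sig (constructive_indefinite_description _ (exD y)).
have hD y x : ip (P (T x)) y = ip x (D y)
  := proj2_sig (constructive_indefinite_description _ (exD y)) x.
exists D; split; first by move=> x y; exact: hD.
move=> x; apply/eqP; rewrite -subr_eq0; apply/eqP; apply: ipxx_eq0.
set r := A (P (T x)) - D (A x).
have h z : ip z r = 0.
  by rewrite /r ipBr -hD (ip_conj (P (T z)) (A x)) -H2 -ip_conj subrr.
exact: h.
Qed.

End Adj.
End Fwd.
End Main.
End Basics.


Theorem mainTheorem3 (R : realType) (V : lmodType R[i]) (ip : V -> V -> R[i])
  (A T P : V -> V) :
  separable_hilbert ip ->
  positive_op ip A ->
  bounded_op ip T ->
  is_orth_proj ip P (closure_range ip A) ->
  (A_projection ip A T <->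
   op_idempotent (fun x : V => P (T x)) /\ A_selfadjoint ip A (fun x : V => P (T x))).
Proof.
move=> [Hip Hcomp _] [[HAl0 _] HApos] [HTl0 HTb] [HPM HPo].
have HAl : @lin R V A := HAl0.
have HTl : @lin R V T := HTl0.
split.
  move=> HAP.
  have [K [K0 HKb]] := Tbound _ _ _ Hip _ HTl HTb.
  split.
    exact: (idem _ _ _ Hip _ _ _ HAl HApos HTl HPM HPo HAP).
  exact: (fwd_sa _ _ _ Hip _ _ _ HAl HApos HTl HPM HPo HAP _ K0 HKb Hcomp).
move=> [hidem [D [Dadj HD]]].
exact: (back _ _ _ Hip _ _ _ HAl HApos HTl HPo _ hidem Dadj HD).
Qed.
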